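(* Let $T$ be an oriented tree. Suppose there exists an integer $d$ such that every finite digraph $G$ with minimum out-degree $\delta^+(G)\geq d$ contains $T$ as a subgraph. Then $T$ is grounded, i.e. its height function $h_T$ takes the same value on all vertices $v$ of $T$ with in-degree $\deg^-_T(v)\geq 2$.
   Context: Digraphs are finite, have no loops and no multiple copies of the same edge, but may contain two edges in opposite directions between a pair of vertices. An oriented tree is an orientation of an undirected tree. For an oriented tree $T$, a height function $h_T\colon V(T)\to\mathbb{Z}$ is a function with $h_T(v)=h_T(u)+1$ for every edge $(u,v)\in E(T)$; it exists and is unique up to an additive constant. $\delta^+(G)$ denotes the minimum out-degree of $G$. ''Contains $T$ as a subgraph'' means $G$ has a subgraph isomorphic to $T$ (as a digraph). *)

(* Defs.v *)
From mathcomp Require Import all_boot all_order all_algebra.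
Set Implicit Arguments. Unset Strict Implicit. Unset Printing Implicit Defensive.

(* A (finite) digraph is a finType of vertices V with an edge relation E : rel V.
   Being a relation, there are no multiple copies of the same edge; opposite
   edges (E x y and E y x) are allowed.  Loops are excluded by [irreflexive E]. *)

Definition outdeg (V : finType) (E : rel V) (v : V) : nat := #|[set w | E v w]|.
Definition indeg (V : finType) (E : rel V) (v : V) : nat := #|[set u | E u v]|.

Definition undirected (V : finType) (E : rel V) : rel V := fun x y => E x y || E y x.

Definition oriented_tree (V : finType) (E : rel V) : Prop :=
  [/\ irreflexive E,
      (forall x y, E x y -> ~~ E y x),
      0 < #|V|,
      (forall x y, connect (undirected E) x y) &
      (forall c : seq V, 3 <= size c -> uniq c -> ~~ cycle (undirected E) c)].

Definition height_fun (V : finType) (E : rel V) (h : V -> int) : Prop :=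
  forall u v, E u v -> h v = (h u + 1)%R.

Definition grounded (V : finType) (E : rel V) : Prop :=
  exists h : V -> int, height_fun E h /\
    (forall u v, 2 <= indeg E u -> 2 <= indeg E v -> h u = h v).

Definition contains_subgraph (VG : finType) (EG : rel VG)
    (VT : finType) (ET : rel VT) : Prop :=
  exists f : VT -> VG, injective f /\ (forall x y, ET x y -> EG (f x) (f y)).

(* Main.v *)
Require Import Defs.
From mathcomp Require Import all_boot all_order all_algebra zify.
Definition Vt (m n : nat) := {p : 'I_m * 'I_(n ^ m) | (p.2 < n ^ p.1.+1)%N}.
Definition Et m n : rel (Vt m n) := fun p q =>
  if ((val p).1.+1 < m)%N then (((val q).1 : nat) == (val p).1.+1) && (((val q).2 %/ n)%N == (val p).2)
  else (((val q).1 : nat) == 0%N).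

Lemma Et_irr m n : (1 < m)%N -> irreflexive (Et m n).
Proof.
move=> hm p; rewrite /Et; case: ifP => h.
  by apply/negP => /andP[/eqP e _]; lia.
by apply/negP => /eqP e; move: h; rewrite e; lia.
Qed.

Lemma Et_lev m n (p q : Vt m n) : Et m n p q -> ((val q).1 : nat) = if ((val p).1.+1 < m)%N then (val p).1.+1 else 0%N.
Proof. by rewrite /Et; case: ifP => _ => [/andP[/eqP -> _]|/eqP ->]. Qed.

Lemma Et_uniq m n (p p' q : Vt m n) : Et m n p q -> Et m n p' q -> ((val q).1 : nat) != 0%N -> p = p'.
Proof.
rewrite /Et; case: ifP => _; last by move=> /eqP ->.
case: ifP => _; last by move=> _ /eqP ->.
move=> /andP[/eqP e1 /eqP e2] /andP[/eqP e1' /eqP e2'] _.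
apply: val_inj; move: e1 e2 e1' e2'.
case: (val p) => a b; case: (val p') => a' b' /= e1 e2 e1' e2'.
congr pair; apply: val_inj => /=; lia.
Qed.

Lemma Et_out m n v : (1 < m)%N -> (0 < n)%N -> (n <= outdeg (Et m n) v)%N.
Proof.
move=> hm hn; rewrite /outdeg.
case: v => [[i x] /= hv].
have [g [ginj gE]] : exists g : 'I_n -> Vt m n, injective g /\
    forall a, Et m n (exist _ (i, x) hv) (g a).
  case: (ltnP i.+1 m) => hi.
    have hy (a : 'I_n) : (x * n + a < n ^ i.+2)%N.
      have : (x.+1 * n <= n ^ i.+1 * n)%N by rewrite leq_mul2r hv orbT.
      rewrite [n ^ i.+2]expnSr mulSn; have := ltn_ord a; lia.
    have hy' (a : 'I_n) : (x * n + a < n ^ m)%N.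
      apply: (leq_trans (hy a)); apply: leq_pexp2l => //; lia.
    have hP (a : 'I_n) : ((Ordinal hi), (Ordinal (hy' a))) \in
        (fun p : 'I_m * 'I_(n ^ m) => (p.2 < n ^ p.1.+1)%N).
      by rewrite unfold_in /=.
    exists (fun a => insubd (exist _ (i, x) hv) ((Ordinal hi), (Ordinal (hy' a)))).
    split.
      move=> a b /(congr1 val); rewrite !insubdK // => /(congr1 (fun p => val p.2)) /=.
      move=> e; apply: val_inj => /=; lia.
    move=> a; rewrite /Et /= hi insubdK //=.
    by rewrite eqxx /= divnMDl // divn_small ?addn0.
  have hm0 : (0 < m)%N by lia.
  have hy' (a : 'I_n) : (a < n ^ m)%N.
    apply: (leq_trans (ltn_ord a)); rewrite -{1}(expn1 n); apply: leq_pexp2l => //; lia.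
  have hP (a : 'I_n) : ((Ordinal hm0), (Ordinal (hy' a))) \in
        (fun p : 'I_m * 'I_(n ^ m) => (p.2 < n ^ p.1.+1)%N).
    by rewrite unfold_in /= expn1.
  exists (fun a => insubd (exist _ (i, x) hv) ((Ordinal hm0), (Ordinal (hy' a)))).
  split.
    move=> a b /(congr1 val); rewrite !insubdK // => /(congr1 (fun p => val p.2)) /= e.
    exact: val_inj.
  move=> a; rewrite /Et /= ltnNge hi /= insubdK //=.
rewrite -{1}(card_ord n) -cardsT -(card_imset _ ginj).
apply: subset_leq_card; apply/subsetP => w /imsetP [a _ ->]; by rewrite inE.
Qed.

Theorem theorem1p3 (VT : finType) (ET : rel VT) :
  oriented_tree ET ->
  (exists d : nat,
     forall (VG : finType) (EG : rel VG),
       0 < #|VG| -> irreflexive EG ->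
       (forall v : VG, d <= outdeg EG v) ->
       contains_subgraph EG ET) ->
  grounded ET.
Proof.
move=> [_ _ VT0 _ _] [d H].
pose m := #|VT|.+1; pose n := d.+1.
have hm : (1 < m)%N by rewrite /m ltnS.
have hm0 : (0 < m)%N by lia.
have hN : (0 < n ^ m)%N by rewrite expn_gt0.
have [||| f [finj fE]] := H (Vt m n) (Et m n).
- apply/card_gt0P.
  have hP : (0 < n ^ 1)%N by rewrite expn1.
  by exists (exist (fun p : 'I_m * 'I_(n ^ m) => (p.2 < n ^ p.1.+1)%N) (Ordinal hm0, Ordinal hN) hP).
- exact: Et_irr.
- by move=> v; apply: (@leq_trans n); [exact: leqnSn | exact: Et_out].
pose lev x : 'I_m := (val (f x)).1.
have levE x y : ET x y -> (lev y : nat) = if ((lev x).+1 < m)%N then (lev x).+1 else 0%N.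
  by move=> /fE /Et_lev.
have lev0 u : (2 <= indeg ET u)%N -> (lev u : nat) = 0%N.
  move=> /card_gt1P [w1 [w2 [h1 h2 ne]]]; rewrite !inE in h1 h2.
  apply/eqP; apply/negPn/negP => hne.
  have := @Et_uniq m n _ _ _ (fE _ _ h1) (fE _ _ h2) hne.
  by move/finj => e; rewrite e eqxx in ne.
have [r hr] : exists r : 'I_m, forall x, lev x != r.
  pose S := [set lev x | x in VT].
  have hS : (#|S| <= #|VT|)%N := leq_imset_card _ _.
  have : (0 < #|~: S|)%N.
    have := cardsC S; rewrite card_ord /m; move: hS; clearbody S; move: #|S| #|~: S| => a b; lia.
  move=> /card_gt0P [r]; rewrite inE => hr; exists r => x.
  apply: contraNneq hr => <-; exact: imset_f.
exists (fun x => Posz (if (r <= lev x)%N then lev x - r else lev x + m - r)%N).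
split.
- clearbody lev; move=> x y /levE e.
  have hx : (lev x : nat) != r := hr x; have hy : (lev y : nat) != r := hr y.
  have := ltn_ord (lev x); have := ltn_ord r; move: e hx hy.
  case: (ltnP (lev x).+1 m) => h1 e hx hy ? ?;
    case: (leqP r (lev x)) => h2; case: (leqP r (lev y)) => h3; rewrite -PoszD; congr Posz; lia.
- by move=> u v hu hv; rewrite (lev0 u hu) (lev0 v hv).
Qed.
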